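(* Let $n\ge 1$, let $A=\{\mathit{pts}_1,\ldots,\mathit{pts}_n\}\subseteq\mathit{PTS}$, and let $\mathit{pts}=\nabla((\mathit{pts}_1,\tfrac1n),\ldots,(\mathit{pts}_n,\tfrac1n))$. Then $\mathit{PTS}$, ordered by the subtyping relation $\le$ (with equality taken to be $\equiv$), is a complete lattice, and $\mathit{pts}$ is the least upper bound $\bigvee A$ of $A$.
   Context: $\mathit{Var}$ is a finite set of program variables. $\mathit{Addrs}=\{x' \mid x\in\mathit{Var}\}$ is a set of symbolic addresses (one per variable) and $\mathit{Addrs}_p=\mathit{Addrs}\times[0,1]$. $\textit{Pre-PTS}$ is the set of maps $\mathit{pts}:\mathit{Var}\to 2^{\mathit{Addrs}_p}$ such that for all $x,y\in\mathit{Var}$, if $(y',p_1),(y',p_2)\in\mathit{pts}(x)$ then $p_1=p_2$. For $\mathit{pts}\in\textit{Pre-PTS}$ and $x\in\mathit{Var}$, $\sum_{\mathit{pts}} x=\sum_{(z',p)\in\mathit{pts}(x)} p$ and $A_{\mathit{pts}}(x)=\{z'\mid \exists p>0.\ (z',p)\in\mathit{pts}(x)\}$. The set of points-to types is $\mathit{PTS}=\{\mathit{pts}\in\textit{Pre-PTS}\mid \forall x\in\mathit{Var}.\ \sum_{\mathit{pts}} x\le 1\}$. Subtyping: $\mathit{pts}\le\mathit{pts}'$ iff $A_{\mathit{pts}}(x)\subseteq A_{\mathit{pts}'}(x)$ for all $x$; equality: $\mathit{pts}\equiv\mathit{pts}'$ iff $A_{\mathit{pts}}(x)=A_{\mathit{pts}'}(x)$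 for all $x$. For $\mathit{pts}_1,\ldots,\mathit{pts}_n\in\mathit{PTS}$ and weights $q_1,\ldots,q_n\in[0,1]$ with sum $\le 1$, $\nabla((\mathit{pts}_1,q_1),\ldots,(\mathit{pts}_n,q_n))(x)=\{(z',p)\mid (\exists i.\ z'\in A_{\mathit{pts}_i}(x))\wedge p=\sum_{k:\ (z',p_k)\in\mathit{pts}_k(x)} q_k\, p_k\}$. *)

(* Defs.v *)
From mathcomp Require Import all_boot all_order all_algebra.
From mathcomp Require Import all_classical all_reals.
Import GRing.Theory Num.Theory.
Set Implicit Arguments. Unset Strict Implicit. Unset Printing Implicit Defensive.
Local Open Scope ring_scope.
Local Open Scope classical_set_scope.

(* The symbolic address
   x' of a variable x is represented by x itself (Addrs is in bijection with
   Var via x |-> x'). *)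
Definition Addrs (Var : finType) : Type := Var.

Definition ptsT (R : realType) (Var : finType) := Var -> set (Var * R).

Section PTS.
Variables (R : realType) (Var : finType).
Implicit Types (pts : ptsT R Var).

Definition prePTS pts : Prop :=
  (forall x z p, pts x (z, p) -> 0 <= p <= 1) /\
  (forall x y p1 p2, pts x (y, p1) -> pts x (y, p2) -> p1 = p2).

Definition sum_pts pts (x : Var) : R := \sum_(zp \in pts x) zp.2.

Definition Apts pts (x : Var) : set Var := [set z | exists2 p, 0 < p & pts x (z, p)].

Definition isPTS pts : Prop := prePTS pts /\ forall x, sum_pts pts x <= 1.

Definition subty pts pts' : Prop := forall x, Apts pts x `<=` Apts pts' x.
Definition eqty pts pts' : Prop := forall x, Apts pts x = Apts pts' x.

(* The inner sum over [set p | pts k x (z,p)] is p_k if pts_k(x) contains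
   (z,p_k) (unique by Pre-PTS) and 0 otherwise. *)
Definition nabla (n : nat) (ps : 'I_n -> ptsT R Var) (q : 'I_n -> R) : ptsT R Var :=
  fun x => [set zp | (exists i, Apts (ps i) x zp.1) /\
      zp.2 = \sum_(k < n) q k * (\sum_(p \in [set p | ps k x (zp.1, p)]) p)].

Definition is_lub_pts (S : set (ptsT R Var)) (u : ptsT R Var) : Prop :=
  [/\ isPTS u, (forall s, S s -> subty s u) &
      (forall v, isPTS v -> (forall s, S s -> subty s v) -> subty u v)].

Definition is_glb_pts (S : set (ptsT R Var)) (l : ptsT R Var) : Prop :=
  [/\ isPTS l, (forall s, S s -> subty l s) &
      (forall v, isPTS v -> (forall s, S s -> subty v s) -> subty v l)].

Definition PTS_complete_lattice : Prop :=
  [/\ (forall a, isPTS a -> subty a a),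
      (forall a b c, isPTS a -> isPTS b -> isPTS c ->
          subty a b -> subty b c -> subty a c),
      (forall a b, isPTS a -> isPTS b -> subty a b -> subty b a -> eqty a b),
      (forall S, S `<=` isPTS -> exists u, is_lub_pts S u) &
      (forall S, S `<=` isPTS -> exists l, is_glb_pts S l)].

End PTS.

(* Main.v *)
Require Import Defs.
From mathcomp Require Import all_boot all_order all_algebra.
From mathcomp Require Import all_classical all_reals.
Import Order.TTheory GRing.Theory Num.Theory.
Local Open Scope ring_scope.
Local Open Scope classical_set_scope.

Section H.
Variables (R : realType) (Var : finType).

Definition valf (P : set (Var * R)) (z : Var) : R := \sum_(p \in [set p | P (z, p)]) p.

Lemma valf_in (P : set (Var * R)) z p :
  (forall p1 p2, P (z,p1) -> P (z,p2) -> p1 = p2) -> P (z,p) -> valf P z = p.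
Proof.
move=> U Pz; rewrite /valf.
have -> : [set p | P (z, p)] = [set p] by apply/seteqP; split => q /=; [move=> Pq; exact: U Pq Pz| move=> ->].
by rewrite fsbig_set1.
Qed.

Lemma valf_out (P : set (Var * R)) z :
  (forall p, ~ P (z,p)) -> valf P z = 0.
Proof.
move=> N; rewrite /valf fsbig1 // => p /= Pp; case: (N p Pp).
Qed.

Lemma sum_valf (P : set (Var * R)) :
  (forall z p1 p2, P (z,p1) -> P (z,p2) -> p1 = p2) ->
  \sum_(zp \in P) zp.2 = \sum_(z <- enum Var) valf P z.
Proof.
move=> U.
pose D := [set z | exists p, P (z, p)].
have E : P = (fun z => (z, valf P z)) @` D.
  apply/seteqP; split.
    move=> [z p] Pzp; exists z; first by exists p.
    by rewrite (@valf_in P z p (U z) Pzp).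
  move=> _ [z [p Pzp] <-]; by rewrite (@valf_in P z p (U z) Pzp).
rewrite [in LHS]E fsbig_image /=; last by move=> a b _ _ [].
apply: (fsbig_fwiden (enum Var)).
- by move=> z _; rewrite /= mem_enum.
- exact: enum_uniq.
- move=> z [_ nD] /=; apply: valf_out => p Pp; apply: nD; by exists p.
Qed.
End H.
Arguments valf {R Var}.
From mathcomp Require Import lra.
Section M.
Variables (R : realType) (Var : finType).

Lemma valf_bounds (P : set (Var * R)) z :
  (forall z p, P (z,p) -> 0 <= p <= 1) ->
  (forall z p1 p2, P (z,p1) -> P (z,p2) -> p1 = p2) ->
  0 <= valf P z <= 1.
Proof.
move=> B U; case: (pselect (exists p, P (z,p))) => [[p Pp]|N].
  by rewrite (@valf_in R Var P z p (U z) Pp); apply: B Pp.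
rewrite valf_out; first by rewrite lexx ler01.
move=> p Pp; apply: N; by exists p.
Qed.

Lemma valf_zero (P : set (Var * R)) z :
  (forall z p, P (z,p) -> 0 <= p <= 1) ->
  (forall z p1 p2, P (z,p1) -> P (z,p2) -> p1 = p2) ->
  ~ (exists2 p, 0 < p & P (z, p)) -> valf P z = 0.
Proof.
move=> B U N; case: (pselect (exists p, P (z,p))) => [[p Pp]|N'].
  rewrite (@valf_in R Var P z p (U z) Pp).
  have /andP[p0 _] := B _ _ Pp.
  apply/le_anti; rewrite p0 andbT leNgt; apply/negP => pp; apply: N; by exists p.
rewrite valf_out // => p Pp; apply: N'; by exists p.
Qed.

Lemma valf_pos (P : set (Var * R)) z :
  (forall z p1 p2, P (z,p1) -> P (z,p2) -> p1 = p2) ->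
  (exists2 p, 0 < p & P (z, p)) -> 0 < valf P z.
Proof.
move=> U [p pp Pp]; by rewrite (@valf_in R Var P z p (U z) Pp).
Qed.

Lemma sum_enum_const (c : R) : \sum_(z <- enum Var) c = c *+ #|Var|.
Proof. by rewrite big_enum /= sumr_const. Qed.

Definition mkP (U : Var -> set Var) : ptsT R Var :=
  fun x => [set zp | U x zp.1 /\ zp.2 = (#|Var|.+1)%:R^-1].

Lemma Apts_mk U x : Apts (mkP U) x = U x.
Proof.
apply/seteqP; split => z /=.
  by case=> p _ [].
move=> Uz; exists (#|Var|.+1)%:R^-1 => //; by rewrite invr_gt0 ltr0n.
Qed.

Lemma isPTS_mk U : isPTS (mkP U).
Proof.
have c0 : 0 < (#|Var|.+1)%:R^-1 :> R by rewrite invr_gt0 ltr0n.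
have c1 : (#|Var|.+1)%:R^-1 <= 1 :> R by rewrite invf_le1 ?ltr0n // ler1n.
have Un : forall x z p1 p2, mkP U x (z,p1) -> mkP U x (z,p2) -> p1 = p2.
  by move=> x z p1 p2 [_ /= ->] [_ /= ->].
split; first split.
- by move=> x z p [_ /= ->]; rewrite (ltW c0) c1.
- exact: Un.
move=> x; rewrite /sum_pts sum_valf; last exact: Un.
apply: (@le_trans _ _ (\sum_(z <- enum Var) (#|Var|.+1)%:R^-1)).
  apply: ler_sum => z _.
  case: (pselect (exists p, mkP U x (z,p))) => [[p Pp]|N].
    by rewrite (@valf_in R Var _ z p (Un x z) Pp); case: Pp => _ /= ->.
  by rewrite valf_out ?(ltW c0) // => p Pp; apply: N; exists p.
rewrite sum_enum_const -(mulr_natl ((#|Var|.+1)%:R^-1)) ler_pdivrMr ?ltr0n // mul1r ler_nat.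
exact: leqnSn.
Qed.

End M.
Arguments valf_bounds {R Var P}.
Arguments valf_pos {R Var P}.
Arguments valf_zero {R Var P}.
Arguments mkP {R Var}.
Arguments isPTS_mk {R Var}.
Arguments Apts_mk {R Var}.
Section N.
Variables (R : realType) (Var : finType) (n : nat) (ps : 'I_n -> ptsT R Var).
Hypothesis n0 : (0 < n)%N.
Hypothesis Hps : forall i, isPTS (ps i).

Let c : R := n%:R^-1.
Let F x z := \sum_(k < n) c * valf (ps k x) z.
Let B k x : forall z p, ps k x (z,p) -> 0 <= p <= 1.
Proof. by move=> z p; case: (Hps k) => [[H _] _]; apply: H. Qed.
Let U k x : forall z p1 p2, ps k x (z,p1) -> ps k x (z,p2) -> p1 = p2.
Proof. by move=> z p1 p2; case: (Hps k) => [[_ H] _]; apply: H. Qed.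

Let c0 : 0 < c. Proof. by rewrite /c invr_gt0 ltr0n. Qed.
Let sumc : \sum_(k < n) c = 1.
Proof.
by rewrite sumr_const card_ord -mulr_natr mulVf // pnatr_eq0 -lt0n.
Qed.

Let nabE x z p : nabla ps (fun _ => c) x (z,p) <->
   (exists i, Apts (ps i) x z) /\ p = F x z.
Proof. by []. Qed.

Let F0 x z : 0 <= F x z.
Proof.
apply: sumr_ge0 => k _; apply: mulr_ge0; first exact: ltW.
by have /andP[] := valf_bounds z (B k x) (U k x).
Qed.

Let F1 x z : F x z <= 1.
Proof.
rewrite -sumc; apply: ler_sum => k _.
rewrite -[leRHS]mulr1 ler_wpM2l ?(ltW c0) //.
by have /andP[] := valf_bounds z (B k x) (U k x).
Qed.

Let Fpos x z : (exists i, Apts (ps i) x z) -> 0 < F x z.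
Proof.
case=> i Ai.
have h1 : 0 < c * valf (ps i x) z by rewrite mulr_gt0 // valf_pos //; exact: U.
have h2 : 0 <= \sum_(k < n | k != i) c * valf (ps k x) z.
  apply: sumr_ge0 => k _; apply: mulr_ge0; first exact: ltW.
  by have /andP[] := valf_bounds z (B k x) (U k x).
rewrite /F (bigD1 i) //=; lra.
Qed.

Lemma Apts_nabla x : Apts (nabla ps (fun _ => c)) x = [set z | exists i, Apts (ps i) x z].
Proof.
apply/seteqP; split => z /=.
  by case=> p _ /nabE [].
move=> Ez; exists (F x z); first exact: Fpos.
exact/nabE.
Qed.

Lemma isPTS_nabla : isPTS (nabla ps (fun _ => c)).
Proof.
have Un : forall x z p1 p2, nabla ps (fun _ => c) x (z,p1) ->
    nabla ps (fun _ => c) x (z,p2) -> p1 = p2.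
  by move=> x z p1 p2 /nabE [_ ->] /nabE [_ ->].
split; first split.
- by move=> x z p /nabE [_ ->]; rewrite F0 F1.
- exact: Un.
move=> x; rewrite /sum_pts sum_valf; last exact: Un.
apply: (@le_trans _ _ (\sum_(z <- enum Var) F x z)).
  apply: ler_sum => z _.
  case: (pselect (exists p, nabla ps (fun _ => c) x (z,p))) => [[p Pp]|N].
    by rewrite (@valf_in R Var _ z p (Un x z) Pp); case/nabE: Pp => _ ->.
  by rewrite valf_out ?F0 // => p Pp; apply: N; exists p.
rewrite /F exchange_big /=.
rewrite -sumc; apply: ler_sum => k _.
rewrite -mulr_sumr -[leRHS]mulr1 ler_wpM2l ?(ltW c0) //.
rewrite -sum_valf; last exact: U.
by case: (Hps k) => _ H; apply: H.
Qed.

End N.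
Arguments Apts_nabla {R Var n ps}.
Arguments isPTS_nabla {R Var n ps}.
Theorem lemma2 (R : realType) (Var : finType) (n : nat)
  (ps : 'I_n -> ptsT R Var) :
  (0 < n)%N -> (forall i, isPTS (ps i)) ->
  PTS_complete_lattice R Var /\
  is_lub_pts [set ps i | i in [set: 'I_n]] (nabla ps (fun _ => n%:R^-1)).
Proof.
move=> n0 Hps; split.
  split.
  - by move=> a _ x.
  - by move=> a b d _ _ _ ab bd x z /ab /bd.
  - by move=> a b _ _ ab ba x; apply/seteqP; split; [apply: ab|apply: ba].
  - move=> S _; exists (mkP (fun x => [set z | exists2 s, S s & Apts s x z])).
    split; first exact: isPTS_mk.
    + by move=> s Ss x z Az; rewrite Apts_mk; exists s.
    + by move=> v _ Hv x z; rewrite Apts_mk => -[s Ss Az]; apply: Hv Ss x z Az.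
  - move=> S _; exists (mkP (fun x => [set z | forall s, S s -> Apts s x z])).
    split; first exact: isPTS_mk.
    + by move=> s Ss x z; rewrite Apts_mk => H; apply: H.
    + by move=> v _ Hv x z Az; rewrite Apts_mk => s Ss; apply: Hv Ss x z Az.
split; first exact: isPTS_nabla.
- move=> _ [i _ <-] x z Az; rewrite Apts_nabla //; by exists i.
- move=> v _ Hv x z; rewrite Apts_nabla // => -[i Az].
  by apply: (Hv (ps i)) Az; exists i.
Qed.
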